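(* Let $n\ge2$, $b_1,\dots,b_n\in\mathbb{R}^d$ with $\|b_i\|\le R'$ ($R'>0$), $B=\frac1n[b_1,\dots,b_n]^T$, each $g_i^*:\mathbb{R}\to\mathbb{R}\cup\{+\infty\}$ proper, lower semicontinuous, convex, $g^*(y)=\frac1n\sum_ig_i^*(y_i)$, and $\ell:\mathbb{R}^d\to\mathbb{R}\cup\{+\infty\}$ proper, lower semicontinuous, $\sigma$-strongly convex ($\sigma\ge0$). For the VRPDA$^2$ algorithm in the context, for all $k\ge2$ and all $(u,v)\in\mathcal{X}\times\mathcal{Y}$, with expectation taken over all randomness of the algorithm, $$\begin{aligned}\mathbb{E}[\psi_k(y_k)]\ge\mathbb{E}\Big[&\psi_{k-1}(y_{k-1})+\frac n2\|y_k-y_{k-1}\|^2+a_kg^*_{j_k}(y_{k,j_k})\\&+a_k\langle B(x_k-x_{k-1}),y_k-v\rangle-a_{k-1}\langle B(x_{k-1}-x_{k-2}),y_{k-1}-v\rangle\\&-na_{k-1}\langle B(x_{k-1}-x_{k-2}),y_k-y_{k-1}\rangle+a_k\langle-Bx_k,y_k-v\rangle\\&-(n-1)a_k\big(\langle B(x_{k-1}-u),y_k-y_{k-1}\rangle+\langle Bu,y_k-y_{k-1}\rangle\big)\Big],\end{aligned}$$ $$\mathbb{E}[\phi_k(x_k)]\ge\mathbb{E}\Big[\phi_{k-1}(x_{k-1})+\frac{n+\sigma A_{k-1}}{2}\|x_k-x_{k-1}\|^2+a_k\big(\langle x_k-u,B^Ty_k\rangle+(n-1)\langle x_k-u,B^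T(y_k-y_{k-1})\rangle+\ell(x_k)\big)\Big].$$
   Context: Norms are Euclidean; $\sigma$-strong convexity of $f$ means $f((1-\alpha)x+\alpha\hat x)\le(1-\alpha)f(x)+\alpha f(\hat x)-\frac\sigma2\alpha(1-\alpha)\|\hat x-x\|^2$. $\mathcal{X}=\mathrm{dom}(\ell)$, $\mathcal{Y}=\mathrm{dom}(g^* )$; $y_{k,j}$ is the $j$-th coordinate of $y_k$. VRPDA$^2$ algorithm: given $(x_0,y_0),(u,v)\in\mathcal{X}\times\mathcal{Y}$: $\phi_0(x)=\frac12\|x-x_0\|^2$, $\psi_0(y)=\frac12\|y-y_0\|^2$, $a_0=A_0=0$, $\tilde a_1=\frac1{2R'}$; $\tilde\psi_1(y)=\psi_0(y)+\tilde a_1(\langle-Bx_0,y-v\rangle+g^*(y))$, $y_1=\arg\min\tilde\psi_1$; $z_1=B^Ty_1$; $\tilde\phi_1(x)=\phi_0(x)+\tilde a_1(\langle x-u,z_1\rangle+\ell(x))$, $x_1=\arg\min\tilde\phi_1$; $\psi_1=n\tilde\psi_1$, $\phi_1=n\tilde\phi_1$, $a_1=A_1=n\tilde a_1$, $a_2=\frac{a_1}{n-1}$, $A_2=A_1+a_2$. For $k=2,3,\dots$: $\bar x_{k-1}=x_{k-1}+\frac{a_{k-1}}{a_k}(x_{k-1}-x_{k-2})$; pick $j_k$ uniformly at random from $\{1,\dots,n\}$, independently of the past; $\psi_k(y)=\psi_{k-1}(y)+a_k(-b_{j_k}^T\bar x_{k-1}(y_{j_k}-v_{j_k})+g^*_{j_k}(y_{j_k}))$,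 $y_k=\arg\min_y\psi_k(y)$; $\phi_k(x)=\phi_{k-1}(x)+a_k(\langle x-u,z_{k-1}+(y_{k,j_k}-y_{k-1,j_k})b_{j_k}\rangle+\ell(x))$, $x_k=\arg\min_x\phi_k(x)$; $z_k=z_{k-1}+\frac1n(y_{k,j_k}-y_{k-1,j_k})b_{j_k}$; $a_{k+1}=\min\{(1+\frac1{n-1})a_k,\frac{\sqrt{n(n+\sigma A_k)}}{2R'}\}$, $A_{k+1}=A_k+a_{k+1}$. *)

(* Defs.v *)
From HB Require Import structures.
From mathcomp Require Import all_boot all_order all_algebra.
From mathcomp Require Import all_classical all_reals all_analysis.
Set Implicit Arguments. Unset Strict Implicit. Unset Printing Implicit Defensive.
Import Order.TTheory GRing.Theory Num.Theory.
Import numFieldNormedType.Exports.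
Local Open Scope ring_scope.

Definition dot {R : realType} {m : nat} (u w : 'cV[R]_m) : R :=
  \sum_(i < m) u i ord0 * w i ord0.
Definition sqn {R : realType} {m : nat} (u : 'cV[R]_m) : R := dot u u.

Definition Bm {R : realType} {n d : nat} (b : 'I_n -> 'cV[R]_d) : 'M[R]_(n, d) :=
  \matrix_(i < n, j < d) ((n%:R)^-1 * b i j ord0).

Local Open Scope ereal_scope.

Definition proper_fun {T : Type} {R : realType} (f : T -> \bar R) : Prop :=
  (forall x, f x != -oo) /\ (exists x, f x \is a fin_num).

Definition convex_ext {R : realType} (f : R -> \bar R) : Prop :=
  forall (x x' a : R), (0 < a < 1)%R ->
    f ((1 - a) * x + a * x')%R <= (1 - a)%:E * f x + a%:E * f x'.

Definition strongly_convex {R : realType} {d : nat} (sigma : R)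
  (f : 'cV[R]_d -> \bar R) : Prop :=
  forall (x x' : 'cV[R]_d) (a : R), (0 < a < 1)%R ->
    f ((1 - a) *: x + a *: x')%R <=
      (1 - a)%:E * f x + a%:E * f x' - (sigma / 2 * a * (1 - a) * sqn (x' - x))%:E.

Definition gstar {R : realType} {n : nat} (gs : 'I_n -> R -> \bar R)
  (y : 'cV[R]_n) : \bar R :=
  ((n%:R)^-1)%:E * \sum_(i < n) gs i (y i ord0).

Definition domX {R : realType} {d : nat} (l : 'cV[R]_d -> \bar R) (x : 'cV[R]_d) : Prop :=
  l x < +oo.
Definition domY {R : realType} {n : nat} (gs : 'I_n -> R -> \bar R) (y : 'cV[R]_n) : Prop :=
  forall i, gs i (y i ord0) < +oo.

Local Close Scope ereal_scope.

Fixpoint aA {R : realType} (n : nat) (sigma Rp : R) (k : nat) : R * R :=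
  match k with
  | 0 => (0, 0)
  | 1 => (n%:R / (2 * Rp), n%:R / (2 * Rp))
  | 2 => let a1 := n%:R / (2 * Rp) in (a1 / (n%:R - 1), a1 + a1 / (n%:R - 1))
  | k'.+1 =>
      let p := aA n sigma Rp k' in
      let a := Num.min ((1 + (n%:R - 1)^-1) * p.1)
                       (Num.sqrt (n%:R * (n%:R + sigma * p.2)) / (2 * Rp)) in
      (a, p.2 + a)
  end.
Definition sa {R : realType} (n : nat) (sigma Rp : R) (k : nat) : R := (aA n sigma Rp k).1.
Definition sA {R : realType} (n : nat) (sigma Rp : R) (k : nat) : R := (aA n sigma Rp k).2.
Definition at1 {R : realType} (Rp : R) : R := (2 * Rp)^-1.

(* The iterates are given as functions of the random index sequence js
   (js k = j_k, only used for k >= 2) and of the step k. *)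

Fixpoint zs {R : realType} {n d : nat} (b : 'I_n -> 'cV[R]_d)
  (ys : (nat -> 'I_n) -> nat -> 'cV[R]_n) (js : nat -> 'I_n) (k : nat) : 'cV[R]_d :=
  match k with
  | 0 => 0
  | 1 => (Bm b)^T *m ys js 1%N
  | k'.+1 => let j := js k in
      zs b ys js k' + ((n%:R)^-1 * (ys js k j ord0 - ys js k' j ord0)) *: b j
  end.

Definition xbar {R : realType} {n d : nat} (sigma Rp : R)
  (xs : (nat -> 'I_n) -> nat -> 'cV[R]_d) (js : nat -> 'I_n) (k : nat) : 'cV[R]_d :=
  xs js k + (sa n sigma Rp k / sa n sigma Rp k.+1) *: (xs js k - xs js k.-1).

Local Open Scope ereal_scope.

Definition psit1 {R : realType} {n d : nat} (b : 'I_n -> 'cV[R]_d)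
  (gs : 'I_n -> R -> \bar R) (Rp : R) (x0 : 'cV[R]_d) (y0 v : 'cV[R]_n)
  (y : 'cV[R]_n) : \bar R :=
  (sqn (y - y0) / 2)%:E + (at1 Rp)%:E * ((dot (- (Bm b *m x0)) (y - v))%:E + gstar gs y).

Definition phit1 {R : realType} {n d : nat} (b : 'I_n -> 'cV[R]_d)
  (l : 'cV[R]_d -> \bar R) (Rp : R) (x0 u : 'cV[R]_d)
  (ys : (nat -> 'I_n) -> nat -> 'cV[R]_n) (js : nat -> 'I_n)
  (x : 'cV[R]_d) : \bar R :=
  (sqn (x - x0) / 2)%:E + (at1 Rp)%:E * ((dot (x - u) (zs b ys js 1))%:E + l x).

Fixpoint psi {R : realType} {n d : nat} (b : 'I_n -> 'cV[R]_d)
  (gs : 'I_n -> R -> \bar R) (sigma Rp : R) (x0 : 'cV[R]_d) (y0 v : 'cV[R]_n)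
  (xs : (nat -> 'I_n) -> nat -> 'cV[R]_d) (js : nat -> 'I_n) (k : nat)
  (y : 'cV[R]_n) : \bar R :=
  match k with
  | 0 => (sqn (y - y0) / 2)%:E
  | 1 => (n%:R)%:E * psit1 b gs Rp x0 y0 v y
  | k'.+1 => let j := js k in
      psi b gs sigma Rp x0 y0 v xs js k' y
      + (sa n sigma Rp k)%:E *
          ((- dot (b j) (xbar sigma Rp xs js k') * (y j ord0 - v j ord0))%:E + gs j (y j ord0))
  end.

Fixpoint phi {R : realType} {n d : nat} (b : 'I_n -> 'cV[R]_d)
  (l : 'cV[R]_d -> \bar R) (sigma Rp : R) (x0 u : 'cV[R]_d)
  (ys : (nat -> 'I_n) -> nat -> 'cV[R]_n) (js : nat -> 'I_n) (k : nat)
  (x : 'cV[R]_d) : \bar R :=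
  match k with
  | 0 => (sqn (x - x0) / 2)%:E
  | 1 => (n%:R)%:E * phit1 b l Rp x0 u ys js x
  | k'.+1 => let j := js k in
      phi b l sigma Rp x0 u ys js k' x
      + (sa n sigma Rp k)%:E *
          ((dot (x - u) (zs b ys js k' + (ys js k j ord0 - ys js k' j ord0) *: b j))%:E + l x)
  end.

(* Expectation over all the randomness up to step k: j_2, ..., j_k are i.i.d.
   uniform on {1..n} (here 'I_n).  We average over all index sequences
   t : 'I_(k+1) -> 'I_n (entries 0 and 1 are dummies, uniform as well and unused). *)
Definition Exp {R : realType} (n k : nat) (F : (nat -> 'I_n) -> \bar R) : \bar R :=
  ((n%:R ^+ k.+1)^-1)%:E *
    \sum_(t : {ffun 'I_k.+1 -> 'I_n}) F (fun i => t (inord i)).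

(* Main.v *)
Require Import Defs.
From HB Require Import structures.
From mathcomp Require Import all_boot all_order all_algebra.
From mathcomp Require Import ring lra.
From mathcomp Require Import all_classical all_reals all_analysis.
Import Order.TTheory GRing.Theory Num.Theory.
Import numFieldNormedType.Exports.
Local Open Scope ring_scope.

Set Implicit Arguments. Unset Strict Implicit.

Local Open Scope ring_scope.

Section Vec.
Variables (R : realType) (m : nat).
Implicit Types (p q y c : 'cV[R]_m).

Lemma sqn_mix p q (y0 : 'cV[R]_m) (a : R) :
  sqn ((1-a)*:p + a*:q - y0) = (1-a)*sqn(p-y0) + a*sqn(q-y0) - a*(1-a)*sqn(q-p).
Proof.
rewrite /sqn /dot !mulr_sumr -big_split -sumrB /=; apply: eq_bigr => i _.
rewrite !mxE; ring.
Qed.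

Lemma dot_mix c p q (a : R) :
  dot c ((1-a)*:p + a*:q) = (1-a)*dot c p + a*dot c q.
Proof.
rewrite /dot !mulr_sumr -big_split /=; apply: eq_bigr => i _.
rewrite !mxE; ring.
Qed.

Lemma dot_mixl c p q (a : R) :
  dot ((1-a)*:p + a*:q) c = (1-a)*dot p c + a*dot q c.
Proof.
rewrite /dot !mulr_sumr -big_split /=; apply: eq_bigr => i _.
rewrite !mxE; ring.
Qed.

Lemma dotC p q : dot p q = dot q p.
Proof. by rewrite /dot; apply: eq_bigr => i _; rewrite mulrC. Qed.

Lemma dotDl p q c : dot (p + q) c = dot p c + dot q c.
Proof. rewrite /dot -big_split /=; apply: eq_bigr => i _; rewrite !mxE; ring. Qed.
Lemma dotDr p q c : dot c (p + q) = dot c p + dot c q.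
Proof. rewrite /dot -big_split /=; apply: eq_bigr => i _; rewrite !mxE; ring. Qed.
Lemma dotNl p c : dot (- p) c = - dot p c.
Proof. rewrite /dot -sumrN /=; apply: eq_bigr => i _; rewrite !mxE; ring. Qed.
Lemma dotNr p c : dot c (- p) = - dot c p.
Proof. rewrite /dot -sumrN /=; apply: eq_bigr => i _; rewrite !mxE; ring. Qed.
Lemma dotBl p q c : dot (p - q) c = dot p c - dot q c.
Proof. by rewrite dotDl dotNl. Qed.
Lemma dotBr p q c : dot c (p - q) = dot c p - dot c q.
Proof. by rewrite dotDr dotNr. Qed.
Lemma dotZl (r : R) p c : dot (r *: p) c = r * dot p c.
Proof. rewrite /dot mulr_sumr; apply: eq_bigr => i _; rewrite !mxE; ring. Qed.
Lemma dotZr (r : R) p c : dot c (r *: p) = r * dot c p.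
Proof. rewrite /dot mulr_sumr; apply: eq_bigr => i _; rewrite !mxE; ring. Qed.

Lemma sqn_ge0 p : 0 <= sqn p.
Proof. by apply: sumr_ge0 => i _; rewrite -expr2 sqr_ge0. Qed.

Lemma sqn_eq0 p : sqn p = 0 -> p = 0.
Proof.
move=> h; apply/matrixP => i j; rewrite (ord1 j) [RHS]mxE.
have H0 : forall k : 'I_m, predT k -> 0 <= p k ord0 * p k ord0.
  by move=> k _; rewrite -expr2 sqr_ge0.
have := @psumr_eq0P _ _ _ _ H0 h i isT; rewrite /=.
by move/eqP; rewrite mulf_eq0 orbb => /eqP.
Qed.
End Vec.

Local Open Scope ring_scope.

Lemma le_trans_eq (R : realType) (x y z : R) : x <= y -> y = z -> x <= z.
Proof. by move=> h <-. Qed.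

Local Open Scope ereal_scope.
Section Ext.
Variable R : realType.

Lemma noninfD (x y : \bar R) : x != -oo -> y != -oo -> x + y != -oo.
Proof. by case: x => [x| |]; case: y. Qed.

Lemma finP (x : \bar R) : x \is a fin_num -> exists t, x = t%:E.
Proof. by move=> h; exists (fine x); rewrite fineK. Qed.

Lemma le_fin_fin (x : \bar R) (r : R) : x != -oo -> x <= r%:E -> exists t, x = t%:E /\ (t <= r)%R.
Proof. by case: x => [t| |] //= _ h; exists t; split => //; rewrite -lee_fin. Qed.

Lemma mulpinfty (r : R) : (0 < r)%R -> r%:E * +oo = +oo.
Proof. by move=> h; rewrite mulry gtr0_sg // mul1e. Qed.

Lemma noninfM (r : R) (x : \bar R) : (0 < r)%R -> x != -oo -> r%:E * x != -oo.
Proof. by case: x => [t| |] //= h _; rewrite mulpinfty. Qed.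

Lemma finM_inv (r : R) (x : \bar R) : (0 < r)%R -> x != -oo -> r%:E * x \is a fin_num -> x \is a fin_num.
Proof. by case: x => [t| |] //= h _; rewrite mulpinfty. Qed.
End Ext.

Section Sconv.
Variables (R : realType) (m : nat).
Local Notation V := 'cV[R]_m.

Definition noninf (G : V -> \bar R) := forall y, G y != -oo.

Definition sconv (s : R) (G : V -> \bar R) :=
  noninf G /\
  forall p q (a : R), (0 < a < 1)%R -> G p \is a fin_num -> G q \is a fin_num ->
    G ((1-a) *: p + a *: q)%R \is a fin_num /\
    (fine (G ((1-a) *: p + a *: q)%R) <= (1-a) * fine (G p) + a * fine (G q)
                                       - s / 2 * a * (1-a) * sqn (q - p))%R.

Lemma sconv_eqs s s' G : s = s' -> sconv s G -> sconv s' G.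
Proof. by move=> ->. Qed.

Lemma sconv_ext s F G : (forall y, F y = G y) -> sconv s F -> sconv s G.
Proof.
move=> e [h1 h2]; split => [y|p q a ha]; first by rewrite -e.
by rewrite -!e; apply: h2.
Qed.

Lemma sconv_add s1 s2 F G : sconv s1 F -> sconv s2 G -> sconv (s1 + s2) (fun y => F y + G y).
Proof.
move=> [f1 f2] [g1 g2]; split => [y|p q a ha]; first exact: noninfD.
rewrite /= !fin_numD => /andP[fp gp] /andP[fq gq].
have [fm hf] := f2 p q a ha fp fq.
have [gm hg] := g2 p q a ha gp gq.
split; first by apply/andP; split.
rewrite !fineD //.
by apply: le_trans_eq (lerD hf hg) _; ring.
Qed.

Lemma sconv_scale r s F : (0 < r)%R -> sconv s F -> sconv (r * s) (fun y => r%:E * F y).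
Proof.
move=> hr [f1 f2]; split => [y|p q a ha]; first exact: noninfM.
move=> /(finM_inv hr (f1 _)) fp /(finM_inv hr (f1 _)) fq.
have [fm hf] := f2 p q a ha fp fq.
have [tp ep] := finP fp; have [tq eq] := finP fq; have [tm em] := finP fm.
move: hf; rewrite ep eq em -!EFinM /= => hf; split => //.
have := ler_wpM2l (ltW hr) hf.
by move=> h; apply: le_trans h _; rewrite le_eqVlt; apply/orP; left; apply/eqP; ring.
Qed.

Lemma sconv_aff (L : V -> R) :
  (forall p q a, L ((1-a) *: p + a *: q)%R = (1-a) * L p + a * L q)%R ->
  sconv 0 (fun y => (L y)%:E).
Proof.
move=> hL; split => // p q a ha _ _; split => //=.
rewrite hL; apply: le_trans_eq (lexx _) _; ring.
Qed.

Lemma sconv_quad (y0 : V) : sconv 1 (fun y => (sqn (y - y0) / 2)%:E).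
Proof.
split => // p q a ha _ _; split => //=.
rewrite sqn_mix; apply: le_trans_eq (lexx _) _; ring.
Qed.

Lemma sconv_coord (g : R -> \bar R) (j : 'I_m) :
  (forall x, g x != -oo) -> convex_ext g -> sconv 0 (fun y => g (y j ord0)).
Proof.
move=> g1 g2; split => [y|p q a ha]; first exact: g1.
move=> fp fq; have [tp ep] := finP fp; have [tq eq] := finP fq.
have := g2 (p j ord0) (q j ord0) a ha.
rewrite ep eq -!EFinM -EFinD => h.
have [t [et ht]] := le_fin_fin (g1 _) h.
rewrite !mxE et; split => //=.
by apply: le_trans ht _; rewrite le_eqVlt; apply/orP; left; apply/eqP; ring.
Qed.

Lemma sconv_sum (I : Type) (r : seq I) (F : I -> V -> \bar R) :
  (forall i, sconv 0 (F i)) -> sconv 0 (fun y => \sum_(i <- r) F i y).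
Proof.
move=> hF; elim: r => [|i r IH].
  apply: sconv_ext (sconv_aff (L := fun _ => 0%R) _) => [y|p q a]; first by rewrite big_nil.
  by rewrite !mulr0 addr0.
apply: sconv_ext; first by move=> y; rewrite big_cons.
by apply: sconv_eqs (sconv_add (hF i) IH); rewrite addr0.
Qed.

Lemma sconv_strong s (l : V -> \bar R) : (forall x, l x != -oo) -> strongly_convex s l -> sconv s l.
Proof.
move=> l1 l2; split => // p q a ha fp fq.
have [tp ep] := finP fp; have [tq eq] := finP fq.
have := l2 p q a ha.
rewrite ep eq -!EFinM -EFinD => h.
have [t [et ht]] := le_fin_fin (l1 _) h.
rewrite et; split => //=; try exact: ht.
Qed.

Lemma sconv_growth s G (ys : V) : (0 <= s)%R -> sconv s G -> G ys \is a fin_num ->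
  (forall y, G ys <= G y) -> forall y, G ys + (s / 2 * sqn (y - ys))%:E <= G y.
Proof.
move=> s0 [g1 g2] fs hmin y.
have [tys ey] := finP fs.
case Ey: (G y) => [t| |]; last by have := g1 y; rewrite Ey.
  2: by rewrite leey.
rewrite ey -EFinD lee_fin.
have fy : G y \is a fin_num by rewrite Ey.
set K := (s / 2 * sqn (y - ys))%R.
have K0 : (0 <= K)%R by apply: mulr_ge0; [apply: divr_ge0 | apply: sqn_ge0].
have key : forall a : R, (0 < a < 1)%R -> (tys + K <= t + a * K)%R.
  move=> a ha; have [fm hm] := g2 ys y a ha fs fy.
  have := hmin ((1-a) *: ys + a *: y)%R.
  have [tm em] := finP fm; rewrite em ey lee_fin => h1.
  move: hm; rewrite em ey Ey /= => h2.
  have h3 := le_trans h1 h2.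
  move/andP: ha => [a0 a1].
  have : (a * (tys + K) <= a * (t + a * K))%R.
    rewrite -subr_ge0 (_ : (a * (t + a * K) - a * (tys + K) =
      ((1-a)*tys + a*t - s/2*a*(1-a)*sqn(y-ys)) - tys)%R); first by rewrite subr_ge0.
    by rewrite /K; ring.
  by rewrite ler_pM2l.
apply/ler_addgt0Pr => e e0.
pose a := Num.min (2^-1)%R (e / (K + 1))%R.
have a0 : (0 < a)%R by rewrite lt_min invr_gt0 ltr0n /= divr_gt0 // ltr_wpDl.
have a1 : (a < 1)%R by rewrite gt_min; apply/orP; left; rewrite invf_lt1 ?ltr0n // ltr1n.
have := key a; rewrite a0 a1 => /(_ isT) h.
apply: le_trans h _; rewrite lerD2l.
have : (a <= e / (K + 1))%R by rewrite ge_min lexx orbT.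
rewrite ler_pdivlMr ?ltr_wpDl // => h.
nra.
Qed.

Lemma sconv_uniq s G (y1 y2 : V) : (0 < s)%R -> sconv s G -> G y1 \is a fin_num ->
  (forall y, G y1 <= G y) -> (forall y, G y2 <= G y) -> y1 = y2.
Proof.
move=> s0 hG f1 m1 m2.
have h := sconv_growth (ltW s0) hG f1 m1 y2.
have := le_trans h (m2 y1).
have [t et] := finP f1; rewrite et -EFinD lee_fin gerDl => h2.
have : sqn (y2 - y1) = 0%R.
  apply/eqP; rewrite eq_le sqn_ge0 andbT.
  by rewrite -(pmulr_rle0 _ (_ : 0 < s / 2)%R) ?divr_gt0.
by move/sqn_eq0/eqP; rewrite subr_eq0 => /eqP.
Qed.
End Sconv.

Local Open Scope ring_scope.
Local Open Scope ereal_scope.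

Section Sep.
Variables (R : realType) (m : nat).
Local Notation V := 'cV[R]_m.

Definition mix (S : pred 'I_m) (y y' : V) : V := (\col_i (if S i then y i ord0 else y' i ord0))%R.

Definition sep (G : V -> \bar R) :=
  forall S y y', G (mix S y y') + G (mix S y' y) = G y + G y'.

Lemma adde_def_noninf (x y : \bar R) : x != -oo -> y != -oo -> x +? y.
Proof. by case: x => [x| |]; case: y. Qed.

Lemma sep_ext F G : (forall y, F y = G y) -> sep F -> sep G.
Proof. by move=> e h S y y'; rewrite -!e. Qed.

Lemma sep_add F G : sep F -> sep G -> sep (fun y => F y + G y).
Proof. by move=> hF hG S y y'; rewrite addeACA hF hG addeACA. Qed.

Lemma sep_scale (r : R) F : noninf F -> sep F -> sep (fun y => r%:E * F y).
Proof.
move=> n1 hF S y y' /=.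
by rewrite -!muleDr // ?hF // adde_def_noninf.
Qed.

Lemma sep_coord (h : R -> \bar R) (j : 'I_m) : sep (fun y => h (y j ord0)).
Proof. by move=> S y y' /=; rewrite !mxE; case: (S j) => //; rewrite addeC. Qed.

Lemma sep_rsum (f : 'I_m -> R -> R) : sep (fun y => (\sum_i f i (y i ord0))%:E).
Proof.
move=> S y y' /=; rewrite -!EFinD; congr EFin.
rewrite -!big_split /=; apply: eq_bigr => i _; rewrite !mxE.
by case: (S i) => //; rewrite addrC.
Qed.

Lemma sep_esum (f : 'I_m -> R -> \bar R) : sep (fun y => \sum_i f i (y i ord0)).
Proof.
move=> S y y' /=.
rewrite -!big_split /=; apply: eq_bigr => i _; rewrite !mxE.
by case: (S i) => //; rewrite addeC.
Qed.

Lemma mix_fin (S : pred 'I_m) y y' i : ((mix S y y') i ord0 = if S i then y i ord0 else y' i ord0)%R.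
Proof. by rewrite mxE. Qed.
End Sep.

Local Open Scope ring_scope.

Section Avg.
Variables (R : realType) (I T : finType) (i0 : I).

Definition sw (c j x : T) := if x == c then j else if x == j then c else x.

Lemma swK c j : involutive (sw c j).
Proof.
move=> x; rewrite /sw.
case: (x =P c) => [->|hc]; first by rewrite eqxx; case: (j =P c) => // ->.
case: (x =P j) => [->|hj]; first by rewrite eqxx.
by move/eqP/negbTE: hc => ->; move/eqP/negbTE: hj => ->.
Qed.

Definition upd (c j : T) (t : {ffun I -> T}) : {ffun I -> T} :=
  [ffun i => if i == i0 then sw c j (t i) else t i].

Lemma updK c j : involutive (upd c j).
Proof.
move=> t; apply/ffunP => i; rewrite !ffunE.
by case: eqP => // _; rewrite swK.
Qed.

Lemma avg (F : {ffun I -> T} -> T -> R) :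
  (forall t t' : {ffun I -> T}, (forall i, i != i0 -> t i = t' i) -> forall j, F t j = F t' j) ->
  \sum_(t : {ffun I -> T}) \sum_j F t j = #|T|%:R * \sum_(t : {ffun I -> T}) F t (t i0).
Proof.
move=> hF.
have step : forall j, \sum_(t : {ffun I -> T}) F t j = #|T|%:R * \sum_(t : {ffun I -> T} | t i0 == j) F t (t i0).
  move=> j.
  rewrite (partition_big (fun t : {ffun I -> T} => t i0) predT) //=.
  rewrite -sum1_card natr_sum mulr_suml; apply: eq_bigr => c _; rewrite mul1r.
  rewrite (reindex_inj (can_inj (updK c j))) /=.
  transitivity (\sum_(t : {ffun I -> T} | t i0 == j) F t j).
    apply: eq_big => [t|t _].
      rewrite /upd ffunE eqxx /sw /=.
      case: (t i0 =P c) => [->|hc]; first by rewrite eq_sym.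
      case: (t i0 =P j) => [_|hj]; first by rewrite /= eqxx.
      by apply/eqP.
    by apply: hF => i hi; rewrite /upd ffunE; move/negbTE: hi => ->.
  by apply: eq_bigr => t /eqP ->.
rewrite exchange_big /=.
under eq_bigr do rewrite step.
rewrite -mulr_sumr; congr (_ * _).
by rewrite (partition_big (fun t : {ffun I -> T} => t i0) predT).
Qed.
End Avg.

Local Open Scope ring_scope.

Lemma aff_dot (R : realType) m (c w : 'cV[R]_m) :
  forall p q (a : R), dot c ((1-a) *: p + a *: q - w) = (1-a) * dot c (p - w) + a * dot c (q - w).
Proof. by move=> p q a; rewrite !dotBr dot_mix; ring. Qed.

Lemma aff_dotl (R : realType) m (c w : 'cV[R]_m) :
  forall p q (a : R), dot ((1-a) *: p + a *: q - w) c = (1-a) * dot (p - w) c + a * dot (q - w) c.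
Proof. by move=> p q a; rewrite !(dotC _ c) aff_dot. Qed.

Lemma aff_coord (R : realType) m (j : 'I_m) (e : R) (w : 'cV[R]_m) :
  forall p q : 'cV[R]_m, forall a : R, e * (((1-a) *: p + a *: q) j ord0 - w j ord0) =
     (1-a) * (e * (p j ord0 - w j ord0)) + a * (e * (q j ord0 - w j ord0)).
Proof. by move=> p q a; rewrite !mxE; ring. Qed.

Local Open Scope ereal_scope.

Lemma fin_le (R : realType) (x y : \bar R) : x != -oo -> x <= y -> y \is a fin_num -> x \is a fin_num.
Proof. by case: x => [x| |] //; case: y. Qed.

Lemma sep_quad (R : realType) m (w : 'cV[R]_m) : sep (fun y => (sqn (y - w) / 2)%:E).
Proof.
apply: sep_ext (sep_rsum (fun i s => (s - w i ord0) * (s - w i ord0) / 2)%R) => y.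
by rewrite /sqn /dot mulr_suml; congr EFin; apply: eq_bigr => i _; rewrite !mxE.
Qed.

Lemma sep_lin (R : realType) m (c w : 'cV[R]_m) : sep (fun y => (dot c (y - w))%:E).
Proof.
apply: sep_ext (sep_rsum (fun i s => c i ord0 * (s - w i ord0))%R) => y.
by rewrite /dot; congr EFin; apply: eq_bigr => i _; rewrite !mxE.
Qed.

Lemma addey_ninf (R : realType) (x : \bar R) : x != -oo -> x + +oo = +oo.
Proof. by case: x. Qed.

Lemma noninf_sum (R : realType) (I : Type) (r : seq I) (f : I -> \bar R) :
  (forall i, f i != -oo) -> \sum_(i <- r) f i != -oo.
Proof.
move=> h; elim: r => [|i r IH]; first by rewrite big_nil.
by rewrite big_cons noninfD.
Qed.

Section Algo.
Variables (R : realType) (n d : nat) (b : 'I_n -> 'cV[R]_d) (Rp sigma : R)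
  (gs : 'I_n -> R -> \bar R) (l : 'cV[R]_d -> \bar R)
  (x0 u : 'cV[R]_d) (y0 v : 'cV[R]_n)
  (xs : (nat -> 'I_n) -> nat -> 'cV[R]_d) (ys : (nat -> 'I_n) -> nat -> 'cV[R]_n).
Hypotheses (n2 : (2 <= n)%N) (Rp0 : (0 < Rp)%R)
  (hg : forall i, proper_fun (gs i) /\ lower_semicontinuous (gs i) /\ convex_ext (gs i))
  (s0 : (0 <= sigma)%R) (lp : proper_fun l) (lsc : strongly_convex sigma l)
  (dXu : domX l u) (dYv : domY gs v)
  (hx0 : forall js, xs js 0%N = x0) (hy0 : forall js, ys js 0%N = y0)
  (m1y : forall js y, psit1 b gs Rp x0 y0 v (ys js 1%N) <= psit1 b gs Rp x0 y0 v y)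
  (m1x : forall js x, phit1 b l Rp x0 u ys js (xs js 1%N) <= phit1 b l Rp x0 u ys js x)
  (mky : forall js (k : nat) y, (2 <= k)%N ->
     psi b gs sigma Rp x0 y0 v xs js k (ys js k) <= psi b gs sigma Rp x0 y0 v xs js k y)
  (mkx : forall js (k : nat) x, (2 <= k)%N ->
     phi b l sigma Rp x0 u ys js k (xs js k) <= phi b l sigma Rp x0 u ys js k x).

Local Notation Psi js k := (psi b gs sigma Rp x0 y0 v xs js k).
Local Notation Phi js k := (phi b l sigma Rp x0 u ys js k).
Local Notation Psit := (psit1 b gs Rp x0 y0 v).
Local Notation Phit js := (phit1 b l Rp x0 u ys js).
Local Notation Z js k := (zs b ys js k).
Local Notation a := (sa n sigma Rp).
Local Notation A := (sA n sigma Rp).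
Local Notation B := (Bm b).

Lemma nR_gt0 : (0 < n%:R :> R)%R.
Proof. by rewrite ltr0n; case: n n2. Qed.

Lemma nR1_gt0 : (0 < n%:R - 1 :> R)%R.
Proof. by rewrite subr_gt0 ltr1n. Qed.

Lemma at1_gt0 : (0 < at1 Rp)%R.
Proof. by rewrite /at1 invr_gt0 mulr_gt0. Qed.

Lemma sa_S k : (2 <= k)%N -> a k.+1 =
  Num.min ((1 + (n%:R - 1)^-1) * a k)%R (Num.sqrt (n%:R * (n%:R + sigma * A k)) / (2 * Rp))%R.
Proof. by case: k => [|[|k]]. Qed.

Lemma sA_S k : (1 <= k)%N -> A k.+1 = (A k + a k.+1)%R.
Proof. by case: k => [|[|k]]. Qed.

Lemma pos k : (1 <= k)%N -> (0 < a k)%R /\ (0 < A k)%R.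
Proof.
have h1 : (0 < n%:R / (2 * Rp) :> R)%R by rewrite divr_gt0 ?nR_gt0 ?mulr_gt0.
elim: k => // k IH hk.
case: k IH hk => [|k] IH _; first by [].
have [ak Ak] := IH isT.
have ak1 : (0 < a k.+2)%R.
  case: k IH ak Ak => [|k] IH _ _; first by rewrite /sa /= divr_gt0 ?nR1_gt0.
  have [ak Ak] := IH isT.
  rewrite sa_S // lt_min; apply/andP; split.
    by rewrite mulr_gt0 // addr_gt0 // invr_gt0 nR1_gt0.
  rewrite divr_gt0 ?mulr_gt0 // sqrtr_gt0 mulr_gt0 ?nR_gt0 //.
  by rewrite ltr_wpDr ?nR_gt0 // mulr_ge0 // ltW.
by split => //; rewrite sA_S // addr_gt0.
Qed.

Lemma a_gt0 k : (1 <= k)%N -> (0 < a k)%R.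
Proof. by move/pos=> []. Qed.
Lemma A_gt0 k : (1 <= k)%N -> (0 < A k)%R.
Proof. by move/pos=> []. Qed.

Lemma gs_ninf i x : gs i x != -oo.
Proof. by have [[h _] _] := hg i. Qed.
Lemma gs_conv i : convex_ext (gs i).
Proof. by have [_ [_ h]] := hg i. Qed.
Lemma l_ninf x : l x != -oo.
Proof. by case: lp. Qed.
Lemma gsv_fin i : gs i (v i ord0) \is a fin_num.
Proof. by rewrite fin_numE gs_ninf /= lt_eqF ?dYv. Qed.
Lemma lu_fin : l u \is a fin_num.
Proof. by rewrite fin_numE l_ninf /= lt_eqF. Qed.

Lemma gstar_sconv : sconv 0 (gstar gs).
Proof.
have h := sconv_scale (r := ((n%:R)^-1)%R) (s := 0%R) _ (sconv_sum (index_enum 'I_n)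
   (F := fun i y => gs i (y i ord0)) (fun i => sconv_coord i (gs_ninf i) (gs_conv i))).
apply: sconv_ext (sconv_eqs _ (h _)) => //; first by rewrite mulr0.
by rewrite invr_gt0 nR_gt0.
Qed.

Lemma psit1_sconv : sconv 1 Psit.
Proof.
have h := sconv_add (sconv_quad y0) (sconv_scale at1_gt0
   (sconv_add (sconv_aff (aff_dot (- (B *m x0)) v)) gstar_sconv)).
apply: sconv_ext (sconv_eqs _ h) => //.
by rewrite !addr0 mulr0 addr0.
Qed.

Lemma psi_sconv js k : (1 <= k)%N -> sconv n%:R (Psi js k).
Proof.
case: k => // k _; elim: k => [|k IH].
  by apply: sconv_eqs (sconv_scale nR_gt0 psit1_sconv); rewrite mulr1.
apply: sconv_eqs (sconv_add IH (sconv_scale (a_gt0 (k := k.+2) isT)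
   (sconv_add (sconv_aff (aff_coord (js k.+2) _ v)) (sconv_coord (js k.+2) (gs_ninf _) (gs_conv _))))).
by rewrite !addr0 mulr0 addr0.
Qed.

Lemma l_sconv : sconv sigma l.
Proof. exact: sconv_strong l_ninf lsc. Qed.

Lemma phit1_sconv js : sconv (1 + at1 Rp * sigma) (Phit js).
Proof.
apply: sconv_eqs (sconv_add (sconv_quad x0) (sconv_scale at1_gt0
   (sconv_add (sconv_aff (aff_dotl (Z js 1) u)) l_sconv))).
by rewrite add0r.
Qed.

Lemma phi_sconv js k : (1 <= k)%N -> sconv (n%:R + sigma * A k) (Phi js k).
Proof.
case: k => // k _; elim: k => [|k IH].
  by apply: sconv_eqs (sconv_scale nR_gt0 (phit1_sconv js)); rewrite /sA /at1 /=; ring.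
apply: sconv_eqs (sconv_add IH (sconv_scale (a_gt0 (k := k.+2) isT)
   (sconv_add (sconv_aff (aff_dotl _ u)) l_sconv))).
by rewrite (sA_S (k := k.+1)) //; ring.
Qed.

Lemma psi_ninf js k y : (1 <= k)%N -> Psi js k y != -oo.
Proof. by move=> hk; case: (psi_sconv js hk). Qed.
Lemma phi_ninf js k y : (1 <= k)%N -> Phi js k y != -oo.
Proof. by move=> hk; case: (phi_sconv js hk). Qed.

Lemma gstar_fin : gstar gs v \is a fin_num.
Proof.
rewrite /gstar fin_numM //; apply/sum_fin_numP => i _ _; exact: gsv_fin.
Qed.

Lemma psi_fin js k : Psi js k v \is a fin_num.
Proof.
elim: k => [|k IH]; first by [].
case: k IH => [|k] IH.
  by rewrite /= fin_numM // /psit1 fin_numD /= fin_numM // fin_numD /= gstar_fin.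
by rewrite /= fin_numD IH /= fin_numM // fin_numD /= gsv_fin.
Qed.

Lemma phi_fin js k : Phi js k u \is a fin_num.
Proof.
elim: k => [|k IH]; first by [].
case: k IH => [|k] IH.
  by rewrite /= fin_numM // /phit1 fin_numD /= fin_numM // fin_numD /= lu_fin.
by rewrite /= fin_numD IH /= fin_numM // fin_numD /= lu_fin.
Qed.

Lemma gstar_ninf y : gstar gs y != -oo.
Proof. by case: gstar_sconv. Qed.

Lemma gstar_sep : sep (gstar gs).
Proof.
apply: sep_ext (sep_scale _ _ (sep_esum (fun i s => gs i s))) => //.
by move=> y; apply: noninf_sum => i; apply: gs_ninf.
Qed.

Lemma psit1_sep : sep Psit.
Proof.
apply: sep_ext (sep_add (sep_quad y0) (sep_scale _ _ (sep_add (sep_lin (- (B *m x0)) v) gstar_sep))) => //.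
by move=> y; apply: noninfD => //; apply: gstar_ninf.
Qed.

Lemma psit1_ninf y : Psit y != -oo.
Proof. by case: psit1_sconv. Qed.

Lemma psi_sep js k : sep (Psi js k).
Proof.
elim: k => [|k IH]; first exact: sep_quad.
case: k IH => [|k] IH; first exact: sep_scale _ psit1_ninf psit1_sep.
apply: sep_ext (sep_add IH (sep_scale (a k.+2) _ (sep_coord
  (fun s => ((- dot (b (js k.+2)) (xbar sigma Rp xs js k.+1) * (s - v (js k.+2) ord0))%:E
             + gs (js k.+2) s)) (js k.+2)))) => //.
by move=> y; apply: noninfD => //; apply: gs_ninf.
Qed.

Lemma psi_min js k : (1 <= k)%N -> forall y, Psi js k (ys js k) <= Psi js k y.
Proof.
case: k => // -[|k] _ y; last exact: mky.
by apply: lee_wpmul2l; [rewrite lee_fin ler0n | apply: m1y].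
Qed.

Lemma phi_min js k : (1 <= k)%N -> forall x, Phi js k (xs js k) <= Phi js k x.
Proof.
case: k => // -[|k] _ x; last exact: mkx.
by apply: lee_wpmul2l; [rewrite lee_fin ler0n | apply: m1x].
Qed.

Lemma psi_yfin js k : (1 <= k)%N -> Psi js k (ys js k) \is a fin_num.
Proof. by move=> hk; apply: fin_le (psi_ninf _ _ hk) (psi_min _ hk _) (psi_fin _ _). Qed.

Lemma phi_xfin js k : (1 <= k)%N -> Phi js k (xs js k) \is a fin_num.
Proof. by move=> hk; apply: fin_le (phi_ninf _ _ hk) (phi_min _ hk _) (phi_fin _ _). Qed.

Lemma coord js k i : i != js k.+2 -> ys js k.+2 i ord0 = ys js k.+1 i ord0.
Proof.
move=> hi.
set j := js k.+2; set y := ys js k.+2; set y' := ys js k.+1.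
pose S : pred 'I_n := fun i => i == j.
have hsep := psi_sep js k.+1 S y y'.
set w := mix S y y' in hsep *; set z := mix S y' y in hsep *.
have fy' : Psi js k.+1 y' \is a fin_num by apply: psi_yfin.
have fyfull : Psi js k.+2 y \is a fin_num by apply: psi_yfin.
have fy : Psi js k.+1 y \is a fin_num by move: fyfull => /=; rewrite fin_numD => /andP[].
have fz_ge : Psi js k.+1 y' <= Psi js k.+1 z by apply: psi_min.
have fz : Psi js k.+1 z \is a fin_num.
  rewrite fin_numE psi_ninf // andTb; apply/negP => /eqP Ez.
  have : Psi js k.+1 y + Psi js k.+1 y' \is a fin_num by rewrite fin_numD fy fy'.
  by rewrite -hsep Ez addey_ninf // psi_ninf.
have fw : Psi js k.+1 w <= Psi js k.+1 y.
  rewrite -(leeD2rE _ _ fz) hsep; exact: leeD2l.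
have hw : w j ord0 = y j ord0 by rewrite mix_fin /S eqxx.
have mw : Psi js k.+2 w <= Psi js k.+2 y by rewrite /= -/j hw; apply: leeD2r.
have e : y = w.
  apply: (sconv_uniq nR_gt0 (psi_sconv js (k := k.+2) isT) fyfull) => [y''|y''].
    exact: psi_min.
  exact: le_trans mw (psi_min _ _ _).
by rewrite e mix_fin /S (negbTE hi).
Qed.

Lemma BT_entry (y : 'cV[R]_n) r :
  ((B^T *m y) r ord0 = \sum_i ((n%:R)^-1 * b i r ord0) * y i ord0)%R.
Proof. by rewrite mxE; apply: eq_bigr => i _; rewrite !mxE. Qed.

Lemma zs_S js k : Z js k.+2 = (Z js k.+1 + ((n%:R)^-1 * (ys js k.+2 (js k.+2) ord0
   - ys js k.+1 (js k.+2) ord0)) *: b (js k.+2))%R.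
Proof. by []. Qed.

Lemma zs_inv js k : (1 <= k)%N -> Z js k = (B^T *m ys js k)%R.
Proof.
case: k => // k _; elim: k => [//|k IH].
rewrite zs_S IH; apply/matrixP => r c; rewrite (ord1 c) !mxE.
rewrite (bigD1 (js k.+2)) //= [in RHS](bigD1 (js k.+2)) //=.
rewrite [in RHS](eq_bigr (fun i => (B^T r i * ys js k.+1 i ord0)%R)); last first.
  by move=> i hi; rewrite (coord hi).
rewrite !mxE.
by ring.
Qed.

Lemma psi_S js k y : Psi js k.+2 y = Psi js k.+1 y + (a k.+2)%:E *
  ((- dot (b (js k.+2)) (xbar sigma Rp xs js k.+1) * (y (js k.+2) ord0 - v (js k.+2) ord0))%:E
   + gs (js k.+2) (y (js k.+2) ord0)).
Proof. by []. Qed.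

Lemma phi_S js k x : Phi js k.+2 x = Phi js k.+1 x + (a k.+2)%:E *
  ((dot (x - u) (Z js k.+1 + (ys js k.+2 (js k.+2) ord0 - ys js k.+1 (js k.+2) ord0) *: b (js k.+2)))%:E
   + l x).
Proof. by []. Qed.

Lemma zs_congr js js' m : (forall i, (i <= m)%N -> js i = js' i) ->
  (forall m', (m' <= m)%N -> ys js m' = ys js' m') -> Z js m = Z js' m.
Proof.
elim: m => [//|m IH] hj hy.
case: m IH hj hy => [|m] IH hj hy; first by rewrite /= hy.
rewrite !zs_S IH ?hj ?hy // => [i hi|m' hm']; [apply: hj | apply: hy]; exact: leq_trans (leqnSn _).
Qed.

Lemma psi_congr js js' m : (forall i, (i <= m)%N -> js i = js' i) ->
  (forall m', (m' < m)%N -> xs js m' = xs js' m') -> forall y, Psi js m y = Psi js' m y.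
Proof.
elim: m => [//|m IH] hj hx y.
case: m IH hj hx => [|m] IH hj hx; first by [].
rewrite !psi_S IH ?hj //; last first.
- by move=> m' hm'; apply: hx; exact: leq_trans hm' (leqnSn _).
- by move=> i hi; apply: hj; exact: leq_trans hi (leqnSn _).
by rewrite /xbar !hx.
Qed.

Lemma phi_congr js js' m : (forall i, (i <= m)%N -> js i = js' i) ->
  (forall m', (m' <= m)%N -> ys js m' = ys js' m') -> forall x, Phi js m x = Phi js' m x.
Proof.
elim: m => [//|m IH] hj hy x.
case: m IH hj hy => [|m] IH hj hy; first by rewrite /= /phit1 /= hy.
rewrite !phi_S IH ?hj ?hy //; last first.
- by move=> m' hm'; apply: hy; exact: leq_trans hm' (leqnSn _).
- by move=> i hi; apply: hj; exact: leq_trans hi (leqnSn _).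
rewrite (zs_congr (js' := js')) // => [i hi|m' hm']; [apply: hj | apply: hy]; exact: leq_trans (leqnSn _).
Qed.

Lemma psit1_vfin : Psit v \is a fin_num.
Proof. by rewrite /psit1 fin_numD /= fin_numM // fin_numD /= gstar_fin. Qed.

Lemma phit1_ufin js : Phit js u \is a fin_num.
Proof. by rewrite /phit1 fin_numD /= fin_numM // fin_numD /= lu_fin. Qed.

Lemma phit1_ninf js x : Phit js x != -oo.
Proof. by case: (phit1_sconv js). Qed.

Lemma dep js js' m : (forall i, (i <= m)%N -> js i = js' i) ->
  forall m', (m' <= m)%N -> xs js m' = xs js' m' /\ ys js m' = ys js' m'.
Proof.
elim: m => [|m IH] hj m' hm'.
  by move: hm'; rewrite leqn0 => /eqP ->; rewrite !hx0 !hy0.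
have hj' : forall i, (i <= m)%N -> js i = js' i.
  by move=> i hi; apply: hj; exact: leq_trans hi (leqnSn _).
have IH' := IH hj'.
case: (leqP m' m) => [hm|hm]; first exact: IH'.
have -> : m' = m.+1 by apply/eqP; rewrite eqn_leq hm' hm.
have ey : ys js m.+1 = ys js' m.+1.
  case: m IH IH' hm hm' hj hj' => [|m] IH IH' hm hm' hj hj'.
    apply: (sconv_uniq (ltr01) psit1_sconv _ (m1y js) (m1y js')).
    exact: fin_le (psit1_ninf _) (m1y js v) psit1_vfin.
  have hx' : forall m', (m' < m.+2)%N -> xs js m' = xs js' m'.
    by move=> m'' h; exact: (IH' m'' h).1.
  have hc := psi_congr hj hx'.
  apply: (sconv_uniq nR_gt0 (psi_sconv js (k:=m.+2) isT) (psi_yfin js (k:=m.+2) isT) (psi_min js (k:=m.+2) isT)).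
  by move=> y; rewrite !hc; exact: psi_min.
split => //.
have hy' : forall m', (m' <= m.+1)%N -> ys js m' = ys js' m'.
  move=> m'' h; case: (leqP m'' m) => h2; first exact: (IH' m'' h2).2.
  by have -> : m'' = m.+1 by apply/eqP; rewrite eqn_leq h h2.
case: m IH IH' hm hm' hj hj' ey hy' => [|m] IH IH' hm hm' hj hj' ey hy'.
  have hc : forall x, Phit js x = Phit js' x by move=> x; rewrite /phit1 /= ey.
  have s1 : (0 < 1 + at1 Rp * sigma)%R.
    have := mulr_ge0 (ltW at1_gt0) s0; lra.
  apply: (sconv_uniq s1 (phit1_sconv js) _ (m1x js)).
    exact: fin_le (phit1_ninf _ _) (m1x js u) (phit1_ufin _).
  by move=> x; rewrite !hc; exact: m1x.
have hc := phi_congr hj hy'.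
have s1 : (0 < n%:R + sigma * A m.+2)%R.
  have := mulr_ge0 s0 (ltW (A_gt0 (k := m.+2) isT)); have := nR_gt0; lra.
apply: (sconv_uniq s1 (phi_sconv js (k:=m.+2) isT) (phi_xfin js (k:=m.+2) isT) (phi_min js (k:=m.+2) isT)).
by move=> x; rewrite !hc; exact: phi_min.
Qed.

Lemma Bw_entry (w : 'cV[R]_d) i : ((B *m w) i ord0 = (n%:R)^-1 * dot (b i) w)%R.
Proof. by rewrite mxE /dot mulr_sumr; apply: eq_bigr => r _; rewrite mxE mulrA. Qed.

Lemma dotB (w : 'cV[R]_d) (c : 'cV[R]_n) :
  dot (B *m w) c = ((n%:R)^-1 * \sum_j dot (b j) w * c j ord0)%R.
Proof. by rewrite {1}/dot mulr_sumr; apply: eq_bigr => i _; rewrite Bw_entry mulrA. Qed.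

Lemma dotB_e (w : 'cV[R]_d) (e : 'cV[R]_n) j : (forall i, i != j -> e i ord0 = 0%R) ->
  dot (B *m w) e = ((n%:R)^-1 * dot (b j) w * e j ord0)%R.
Proof.
move=> h; rewrite {1}/dot (bigD1 j) //= big1 ?addr0 ?Bw_entry //.
by move=> i hi; rewrite h // mulr0.
Qed.

Lemma psi_point js k (RB : R) :
  Psi js k.+1 (ys js k.+1) + (n%:R / 2 * sqn (ys js k.+2 - ys js k.+1))%:E
    + (a k.+2)%:E * gs (js k.+2) (ys js k.+2 (js k.+2) ord0)
    + RB%:E + (a k.+2 * (- dot (b (js k.+2)) (xbar sigma Rp xs js k.+1)
         * (ys js k.+2 (js k.+2) ord0 - v (js k.+2) ord0)) - RB)%:E
  <= Psi js k.+2 (ys js k.+2).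
Proof.
set j := js k.+2; set y2 := ys js k.+2; set y1 := ys js k.+1.
set L := (- dot (b j) (xbar sigma Rp xs js k.+1) * (y2 j ord0 - v j ord0))%R.
have -> : Psi js k.+2 y2 = Psi js k.+1 y2 + (a k.+2)%:E * gs j (y2 j ord0) + (a k.+2 * L)%:E.
  rewrite psi_S muleDr // -EFinM -/j -/L.
  by rewrite -addeA; congr (_ + _); rewrite addeC.
rewrite -(addeA _ RB%:E) -EFinD (_ : (RB + (a k.+2 * L - RB) = a k.+2 * L)%R); last by ring.
apply: leeD2r; apply: leeD2r.
exact: (sconv_growth (ler0n _ _) (psi_sconv js (k := k.+1) isT) (psi_yfin js (k := k.+1) isT)
         (psi_min js (k := k.+1) isT)).
Qed.

Definition Wv js k := (a k.+2 *: xs js k.+1 + a k.+1 *: (xs js k.+1 - xs js k))%R.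

Definition RBv js k : R :=
  let K := k.+2 in
  let yk := ys js K in let ykm1 := ys js K.-1 in
  let xk := xs js K in let xkm1 := xs js K.-1 in let xkm2 := xs js K.-2 in
  (a K * dot (B *m (xk - xkm1)) (yk - v)
   - a K.-1 * dot (B *m (xkm1 - xkm2)) (ykm1 - v)
   - n%:R * a K.-1 * dot (B *m (xkm1 - xkm2)) (yk - ykm1)
   + a K * dot (- (B *m xk)) (yk - v)
   - (n%:R - 1) * a K * (dot (B *m (xkm1 - u)) (yk - ykm1)
                         + dot (B *m u) (yk - ykm1)))%R.

Lemma psi_ident js k :
  (a k.+2 * (- dot (b (js k.+2)) (xbar sigma Rp xs js k.+1)
         * (ys js k.+2 (js k.+2) ord0 - v (js k.+2) ord0)) - RBv js k)%R
  = (dot (B *m Wv js k) (ys js k.+1 - v)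
     - dot (b (js k.+2)) (Wv js k) * (ys js k.+1 (js k.+2) ord0 - v (js k.+2) ord0))%R.
Proof.
rewrite /RBv /=.
set j := js k.+2; set y2 := ys js k.+2; set y1 := ys js k.+1.
have hd : forall i, i != j -> (y2 - y1)%R i ord0 = 0%R.
  by move=> i hi; rewrite !mxE coord // subrr.
have e : (y2 - v = (y2 - y1) + (y1 - v))%R by rewrite addrA subrK.
have hdj : (y2 - y1)%R j ord0 = (y2 j ord0 - y1 j ord0)%R by rewrite !mxE.
have eW : (B *m Wv js k = a k.+2 *: (B *m xs js k.+1) + a k.+1 *: (B *m xs js k.+1 - B *m xs js k))%R.
  by rewrite /Wv mulmxDr -!scalemxAr mulmxBr.
rewrite eW e /xbar /Wv.
move: (y2 - y1)%R hd hdj => dd hd hdj.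
rewrite !mulmxBr !dotDl !dotNl !dotZl !dotDr !dotNr !dotZr !(dotB_e _ hd) hdj.
have a2 : (a k.+2 != 0)%R by rewrite gt_eqF // a_gt0.
have n0 : (n%:R != 0 :> R)%R by rewrite gt_eqF // nR_gt0.
rewrite !dotBl !dotBr (_ : k.+1.-1 = k) //. by field; rewrite ?a2 ?n0.
Qed.

Lemma phi_point js k :
  Phi js k.+1 (xs js k.+1)
  + ((n%:R + sigma * A k.+1) / 2 * sqn (xs js k.+2 - xs js k.+1))%:E
  + (a k.+2)%:E * ((dot (xs js k.+2 - u) (B^T *m ys js k.+2)
        + (n%:R - 1) * dot (xs js k.+2 - u) (B^T *m (ys js k.+2 - ys js k.+1)))%:E
      + l (xs js k.+2))
  <= Phi js k.+2 (xs js k.+2).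
Proof.
rewrite phi_S.
have -> : (dot (xs js k.+2 - u) (B^T *m ys js k.+2)
        + (n%:R - 1) * dot (xs js k.+2 - u) (B^T *m (ys js k.+2 - ys js k.+1)) =
     dot (xs js k.+2 - u) (Z js k.+1 + (ys js k.+2 (js k.+2) ord0 - ys js k.+1 (js k.+2) ord0) *: b (js k.+2)))%R.
  rewrite mulmxBr -(zs_inv js (k:=k.+2)) // -(zs_inv js (k := k.+1)) // zs_S.
  rewrite !dotDr !dotNr !dotZr.
  have n0 : (n%:R != 0 :> R)%R by rewrite gt_eqF // nR_gt0.
  by field.
apply: leeD2r.
have s1 : (0 <= n%:R + sigma * A k.+1)%R by rewrite addr_ge0 ?ler0n // mulr_ge0 // ltW // A_gt0.
exact: (sconv_growth s1 (phi_sconv js (k := k.+1) isT) (phi_xfin js (k := k.+1) isT)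
         (phi_min js (k := k.+1) isT)).
Qed.

Lemma Exp_mono k (F G : (nat -> 'I_n) -> \bar R) :
  (forall t : {ffun 'I_k.+1 -> 'I_n}, F (fun i => t (inord i)) <= G (fun i => t (inord i))) ->
  Exp k F <= Exp k G.
Proof.
move=> h; rewrite /Exp; apply: lee_wpmul2l.
  by rewrite lee_fin invr_ge0 exprn_ge0 // ler0n.
by apply: lee_sum => t _; apply: h.
Qed.

Lemma main_phi k :
  Exp k.+2 (fun js =>
    Phi js k.+1 (xs js k.+1)
    + ((n%:R + sigma * A k.+1) / 2 * sqn (xs js k.+2 - xs js k.+1))%:E
    + (a k.+2)%:E * ((dot (xs js k.+2 - u) (B^T *m ys js k.+2)
        + (n%:R - 1) * dot (xs js k.+2 - u) (B^T *m (ys js k.+2 - ys js k.+1)))%:E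
      + l (xs js k.+2)))
  <= Exp k.+2 (fun js => Phi js k.+2 (xs js k.+2)).
Proof. by apply: Exp_mono => t; apply: phi_point. Qed.

Lemma sum_D k : (
  \sum_(t : {ffun 'I_k.+3 -> 'I_n})
    (a k.+2 * (- dot (b (t (inord k.+2))) (xbar sigma Rp xs (fun i => t (inord i)) k.+1)
         * (ys (fun i => t (inord i)) k.+2 (t (inord k.+2)) ord0 - v (t (inord k.+2)) ord0))
     - RBv (fun i => t (inord i)) k) = 0)%R.
Proof.
under eq_bigr do rewrite psi_ident.
pose F (t : {ffun 'I_k.+3 -> 'I_n}) (j : 'I_n) :=
  (dot (B *m Wv (fun i => t (inord i)) k) (ys (fun i => t (inord i)) k.+1 - v)
   - dot (b j) (Wv (fun i => t (inord i)) k) * (ys (fun i => t (inord i)) k.+1 j ord0 - v j ord0))%R.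
have hF : forall t t' : {ffun 'I_k.+3 -> 'I_n}, (forall i, i != inord k.+2 -> t i = t' i) ->
    forall j, F t j = F t' j.
  move=> t t' h j.
  have hj : forall i, (i <= k.+1)%N -> t (inord i) = t' (inord i).
    move=> i hi; apply: h; apply/eqP => /(congr1 (@nat_of_ord _)); rewrite !inordK //.
      by move=> e; move: hi; rewrite e ltnn.
    exact: leq_trans hi _.
  have d1 := dep hj (leqnn k.+1).
  have d0 := dep hj (leqnSn k).
  by rewrite /F /Wv d1.1 d1.2 d0.1.
have := avg hF.
have -> : (\sum_(t : {ffun 'I_k.+3 -> 'I_n}) \sum_j F t j = 0)%R.
  apply: big1 => t _; rewrite /F sumrB sumr_const card_ord dotB -(mulr_natr (_ * _) n) mulrAC mulVf.
    by rewrite mul1r; apply/eqP; rewrite subr_eq0; apply/eqP; apply: eq_bigr => j _; rewrite !mxE.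
  by rewrite gt_eqF // nR_gt0.
move/esym/eqP; rewrite mulf_eq0 card_ord pnatr_eq0 => /orP[/eqP n0|/eqP ->] //.
by exfalso; move: n2; rewrite n0.
Qed.

Lemma main_psi k :
  Exp k.+2 (fun js =>
    Psi js k.+1 (ys js k.+1) + (n%:R / 2 * sqn (ys js k.+2 - ys js k.+1))%:E
    + (a k.+2)%:E * gs (js k.+2) (ys js k.+2 (js k.+2) ord0)
    + (RBv js k)%:E)
  <= Exp k.+2 (fun js => Psi js k.+2 (ys js k.+2)).
Proof.
rewrite /Exp; apply: lee_wpmul2l; first by rewrite lee_fin invr_ge0 exprn_ge0 // ler0n.
set D := fun t : {ffun 'I_k.+3 -> 'I_n} =>
    (a k.+2 * (- dot (b (t (inord k.+2))) (xbar sigma Rp xs (fun i => t (inord i)) k.+1)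
         * (ys (fun i => t (inord i)) k.+2 (t (inord k.+2)) ord0 - v (t (inord k.+2)) ord0))
     - RBv (fun i => t (inord i)) k)%R.
have hD : (\sum_(t : {ffun 'I_k.+3 -> 'I_n}) (D t)%:E) = 0.
  by rewrite sumEFin /D sum_D.
apply: le_trans (_ : _ <= \sum_(t : {ffun 'I_k.+3 -> 'I_n})
   (Psi (fun i => t (inord i)) k.+1 (ys (fun i => t (inord i)) k.+1)
    + (n%:R / 2 * sqn (ys (fun i => t (inord i)) k.+2 - ys (fun i => t (inord i)) k.+1))%:E
    + (a k.+2)%:E * gs (t (inord k.+2)) (ys (fun i => t (inord i)) k.+2 (t (inord k.+2)) ord0)
    + (RBv (fun i => t (inord i)) k)%:E + (D t)%:E)) _.
  by rewrite [X in _ <= X]big_split /= hD adde0.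
by apply: lee_sum => t _; apply: psi_point.
Qed.

End Algo.


Local Open Scope ring_scope.
Local Open Scope ereal_scope.

Theorem lemma5 (R : realType) (n d : nat) (b : 'I_n -> 'cV[R]_d) (Rp sigma : R)
  (gs : 'I_n -> R -> \bar R) (l : 'cV[R]_d -> \bar R)
  (x0 u : 'cV[R]_d) (y0 v : 'cV[R]_n)
  (xs : (nat -> 'I_n) -> nat -> 'cV[R]_d) (ys : (nat -> 'I_n) -> nat -> 'cV[R]_n) :
  (2 <= n)%N -> (0 < Rp)%R -> (forall i, Num.sqrt (sqn (b i)) <= Rp)%R ->
  (forall i, proper_fun (gs i) /\ lower_semicontinuous (gs i) /\ convex_ext (gs i)) ->
  (0 <= sigma)%R ->
  proper_fun l -> lower_semicontinuous l -> strongly_convex sigma l ->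
  domX l x0 -> domX l u -> domY gs y0 -> domY gs v ->
  (* initialization *)
  (forall js, xs js 0%N = x0) -> (forall js, ys js 0%N = y0) ->
  (* y_1 = argmin tilde psi_1, x_1 = argmin tilde phi_1 *)
  (forall js y, psit1 b gs Rp x0 y0 v (ys js 1%N) <= psit1 b gs Rp x0 y0 v y) ->
  (forall js x, phit1 b l Rp x0 u ys js (xs js 1%N) <= phit1 b l Rp x0 u ys js x) ->
  (* y_k = argmin psi_k, x_k = argmin phi_k, k >= 2 *)
  (forall js (k : nat) y, (2 <= k)%N ->
     psi b gs sigma Rp x0 y0 v xs js k (ys js k) <= psi b gs sigma Rp x0 y0 v xs js k y) ->
  (forall js (k : nat) x, (2 <= k)%N ->
     phi b l sigma Rp x0 u ys js k (xs js k) <= phi b l sigma Rp x0 u ys js k x) ->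
  forall k : nat, (2 <= k)%N ->
  let a := sa n sigma Rp in
  let A := sA n sigma Rp in
  let B := Bm b in
  Exp k (fun js => psi b gs sigma Rp x0 y0 v xs js k (ys js k))
  >= Exp k (fun js =>
       let j := js k in
       let yk := ys js k in let ykm1 := ys js k.-1 in
       let xk := xs js k in let xkm1 := xs js k.-1 in let xkm2 := xs js k.-2 in
       psi b gs sigma Rp x0 y0 v xs js k.-1 ykm1
       + (n%:R / 2 * sqn (yk - ykm1))%:E
       + (a k)%:E * gs j (yk j ord0)
       + (a k * dot (B *m (xk - xkm1)) (yk - v)
          - a k.-1 * dot (B *m (xkm1 - xkm2)) (ykm1 - v)
          - n%:R * a k.-1 * dot (B *m (xkm1 - xkm2)) (yk - ykm1)
          + a k * dot (- (B *m xk)) (yk - v)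
          - (n%:R - 1) * a k * (dot (B *m (xkm1 - u)) (yk - ykm1)
                                + dot (B *m u) (yk - ykm1)))%:E)
  /\
  Exp k (fun js => phi b l sigma Rp x0 u ys js k (xs js k))
  >= Exp k (fun js =>
       let yk := ys js k in let ykm1 := ys js k.-1 in
       let xk := xs js k in let xkm1 := xs js k.-1 in
       phi b l sigma Rp x0 u ys js k.-1 xkm1
       + ((n%:R + sigma * A k.-1) / 2 * sqn (xk - xkm1))%:E
       + (a k)%:E * ((dot (xk - u) (B^T *m yk)
                      + (n%:R - 1) * dot (xk - u) (B^T *m (yk - ykm1)))%:E + l xk)).
Proof.
move=> n2 Rp0 _ hg s0 lp _ lsc _ dXu _ dYv hx0 hy0 m1y m1x mky mkx k hk.
case: k hk => [|[|k]] // _.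
move=> a A B; split.
- exact: (main_psi n2 Rp0 hg s0 lp lsc dXu dYv hx0 hy0 m1y m1x mky mkx).
- by apply: (main_phi (gs := gs) (y0 := y0) (v := v)); assumption.
Qed.
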